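(* Let $R$ be a commutative ring with identity and $M$ an $R$-module. If $M$ satisfies the dual of strong Property $\mathcal{A}$, then $W_R(M)$ is an ideal of $R$ (i.e. $M$ is secondal). Conversely, if $R$ is a principal ideal domain and $M$ is a secondal $R$-module, then $M$ satisfies the dual of strong Property $\mathcal{A}$.
   Context: All rings are commutative with identity. For an $R$-module $M$, $W_R(M)=\{r\in R : rM\neq M\}$. A proper submodule $L$ of $M$ is completely irreducible if whenever $L=\bigcap_{i\in I}L_i$ for a family $\{L_i\}_{i\in I}$ of submodules of $M$, then $L=L_i$ for some $i$. An $R$-module $M$ satisfies the dual of strong Property $\mathcal{A}$ if for any $a_1,\dots,a_n\in W_R(M)$ there exists a completely irreducible submodule $L$ of $M$ with $a_iM\subseteq L\neq M$ for all $i=1,\dots,n$. A nonzero $R$-module (or submodule) $N$ is secondal if $W_R(N)$ is an ideal of $R$. *)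

(* Defs.v *)
From HB Require Import structures.
From mathcomp Require Import all_boot all_order all_algebra.
Set Implicit Arguments. Unset Strict Implicit. Unset Printing Implicit Defensive.
Import GRing.Theory.
Local Open Scope ring_scope.

Definition submodule (R : comNzRingType) (M : lmodType R) (N : M -> Prop) : Prop :=
  [/\ N 0,
      (forall x y, N x -> N y -> N (x + y)) &
      (forall (r : R) x, N x -> N (r *: x))].

Definition W (R : comNzRingType) (M : lmodType R) (r : R) : Prop :=
  ~ (forall m : M, exists m' : M, m = r *: m').

Definition ideal (R : comNzRingType) (I : R -> Prop) : Prop :=
  [/\ I 0,
      (forall a b, I a -> I b -> I (a + b)) &
      (forall r a, I a -> I (r * a))].

Definition PID (R : idomainType) : Prop :=
  forall I : R -> Prop, ideal I -> exists a : R, forall x, I x <-> exists r, x = r * a.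

Definition completely_irreducible (R : comNzRingType) (M : lmodType R)
  (L : M -> Prop) : Prop :=
  [/\ submodule L,
      (exists m : M, ~ L m) &
      (forall (I : Type) (Li : I -> M -> Prop),
          (forall i, submodule (Li i)) ->
          (forall x, L x <-> (forall i, Li i x)) ->
          exists i, forall x, Li i x <-> L x)].

(* Dual of strong Property A (n >= 1 elements a_1..a_n, indexed by 'I_n.+1). *)
Definition dual_strong_A (R : comNzRingType) (M : lmodType R) : Prop :=
  forall (n : nat) (a : 'I_n.+1 -> R),
    (forall i, W M (a i)) ->
    exists L : M -> Prop,
      completely_irreducible L /\ (forall i (m : M), L (a i *: m)).

Definition secondal (R : comNzRingType) (M : lmodType R) : Prop :=
  (exists m : M, m != 0) /\ ideal (W M).

(* Main.v *)
Require Import Defs.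
From mathcomp Require Import all_boot all_order all_algebra.
From mathcomp Require Import boolp classical_sets.
From Stdlib Require Import Classical.
Import GRing.Theory.

Local Open Scope ring_scope.
Local Open Scope classical_set_scope.

Lemma exists_ci (R : comNzRingType) (M : lmodType R) (N : M -> Prop) (m0 : M) :
  submodule N -> ~ N m0 ->
  exists L : M -> Prop, completely_irreducible L /\ (forall x, N x -> L x).
Proof.
move=> sN Nm0.
pose P (A : set M) := [/\ submodule A, (forall x, N x -> A x) & ~ A m0].
pose P' (A : set M) := A = set0 \/ P A.
have HZ : forall F : set (set M), F `<=` P' -> total_on F subset -> P' (\bigcup_(X in F) X).
  move=> F FP' Ftot.
  case: (classic (exists X, F X /\ P X)) => [[X0 [FX0 PX0]]|nF]; last first.
    left; apply/seteqP; split => x //= [X FX Xx].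
    case: (FP' X FX) => [XE|PX]; first by rewrite XE in Xx.
    by case: nF; exists X.
  right.
  have bigP : forall X x, F X -> X x -> P X.
    move=> X x FX Xx; case: (FP' X FX) => // XE; by rewrite XE in Xx.
  case: PX0 => [[S0 _ _] NX0 nX0].
  split.
  - split.
    + by exists X0.
    + move=> x y [X FX Xx] [Y FY Yy].
      have [[[_ + _] _ _] [[_ + _] _ _]] := (bigP _ _ FX Xx, bigP _ _ FY Yy).
      move=> aX aY.
      case: (Ftot X Y FX FY) => [XY|YX].
        by exists Y => //; apply: aY => //; apply: XY.
      by exists X => //; apply: aX => //; apply: YX.
    + move=> r x [X FX Xx]; have [[_ _ sX] _ _] := bigP _ _ FX Xx.
      by exists X => //; apply: sX.
  - by move=> x Nx; exists X0 => //; apply: NX0.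
  - by move=> [X FX Xm]; have [_ _ ] := bigP _ _ FX Xm; apply.
have [A [PA Amax]] := Zorn_bigcup HZ.
case: PA => [A0|[sA NA Am0]].
  have PN : P' N by right; split.
  case: (Amax N) => //; rewrite A0; split => // H.
  by have := H 0; case: sN => N0 _ _ /(_ N0).
exists A; split => //; split => //; first by exists m0.
move=> I Li sLi AL.
case: (classic (exists i, ~ Li i m0)) => [[i Lim0]|]; last first.
  move=> H; exfalso; apply: Am0; apply/AL => i.
  by apply: NNPP => Hi; apply: H; exists i.
exists i => x; split; last by move/AL; apply.
have sub : A `<=` Li i by move=> y /AL; apply.
move=> Lix; apply: NNPP => nAx.
apply: (Amax (Li i)).
  by split => // H; apply: nAx; apply: H.
right; split; [exact: sLi| |exact: Lim0].
by move=> y /NA /sub.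
Qed.

Lemma W_sum (R : comNzRingType) (M : lmodType R) (n : nat) (f : 'I_n -> R) :
  ideal (W M) -> (forall i, W M (f i)) -> W M (\sum_i f i).
Proof.
move=> [W0 WD _] Wf.
by apply: (big_ind (W M) W0 WD) => i _; apply: Wf.
Qed.

Theorem theorem2p5 :
  (forall (R : comNzRingType) (M : lmodType R),
      (exists m : M, m != 0%R) -> dual_strong_A M -> secondal M) /\
  (forall (R : idomainType) (M : lmodType R),
      PID R -> secondal M -> dual_strong_A M).
Proof.
split.
  move=> R M [m mn0] HA; split; first by exists m.
  split.
  - move=> H; case: (H m) => m' Hm; move: mn0; by rewrite Hm scale0r eqxx.
  - move=> a b Wa Wb H.
    pose f (i : 'I_2) := if i == ord0 then a else b.
    have Wf : forall i, W M (f i).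
      by move=> i; rewrite /f; case: ifP.
    have [L [[[L0 LD LZ] [mm Lmm] _] HL]] := HA 1%N f Wf.
    apply: Lmm; have [m' ->] := H mm.
    rewrite scalerDl; apply: LD.
      by have := HL ord0 m'.
    by have := HL (@ord_max 1) m'.
  - move=> r a Wa H; apply: Wa => x.
    have [m' ->] := H x.
    by exists (r *: m'); rewrite scalerA mulrC.
move=> R M HP [_ WI] n a Wa.
pose I (x : R) := exists c : 'I_n.+1 -> R, x = \sum_i c i * a i.
have II : ideal I.
  split.
  - by exists (fun _ => 0); rewrite big1 // => i _; rewrite mul0r.
  - move=> x y [c ->] [c' ->]; exists (fun i => c i + c' i).
    by rewrite -big_split /=; apply: eq_bigr => i _; rewrite mulrDl.
  - move=> r x [c ->]; exists (fun i => r * c i).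
    by rewrite mulr_sumr; apply: eq_bigr => i _; rewrite mulrA.
have [d Hd] := HP I II.
have Wd : W M d.
  have [c ->] : I d by apply/Hd; exists 1; rewrite mul1r.
  apply: W_sum => // i.
  by case: WI => _ _ WM; apply: WM.
have aI : forall i, exists r, a i = r * d.
  move=> i; apply/Hd; exists (fun j => if j == i then 1 else 0).
  rewrite (bigD1 i) //= eqxx mul1r big1 ?addr0 // => j /negbTE ->.
  by rewrite mul0r.
have := not_all_ex_not _ _ Wd; case=> m0 Hm0.
have sN : submodule (fun x : M => exists m', x = d *: m').
  split.
  - by exists 0; rewrite scaler0.
  - by move=> x y [u ->] [v ->]; exists (u + v); rewrite scalerDr.
  - by move=> r x [u ->]; exists (r *: u); rewrite !scalerA mulrC.
have [L [CL HL]] := @exists_ci _ _ _ m0 sN Hm0.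
exists L; split => // i m.
apply: HL; have [r ->] := aI i.
by exists (r *: m); rewrite scalerA [r * d]mulrC.
Qed.
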